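(* In the allocation problem and Synchronized Greedy (SG) mechanism described in the context, suppose $\min_j q_j\ge \max_i r_i$. Then the SG mechanism is strategy-proof: for every agent $i$ and every permutation $\sigma_i$ of the goods, letting $\sigma$ be the bid profile in which agent $i$ bids $\sigma_i$ and every other agent $i'$ bids its true list $\pi_{i'}$, it is not the case that $a^\sigma_{i*} >_i a^\pi_{i*}$.
   Context: There are $m$ distinct divisible goods; good $j$ is available in amount $q_j>0$. There are $n$ agents; agent $i$ is to receive a total of $r_i>0$, with $\sum_j q_j=\sum_i r_i$. An allocation is a family $a_{ij}\ge 0$ with $\sum_j a_{ij}=r_i$ and $\sum_i a_{ij}=q_j$; $a_{i*}=(a_{i1},\ldots,a_{im})$ is agent $i$'s share. Each agent $i$ has a true preference list $\pi_i$, a permutation of the goods ($\pi_i(1)$ most preferred); $\pi=(\pi_1,\ldots,\pi_n)$. Agent $i$ prefers $a_{i*}$ to $b_{i*}$, written $a_{i*}>_i b_{i*}$, if the leftmost nonzero coordinate of $(a_{i\pi_i(\ell)}-b_{i\pi_i(\ell)})_{\ell=1}^m$ is positive. The SG mechanism: each agent $i$ bids a permutation $\sigma_i$ of the goods; over time $t\in[0,1]$ each agent $i$ receives, at rate $r_i$, the good highest in $\sigma_i$ among those not yet exhausted (a good is exhausted when the total amount handed out equals $q_j$; several agents may receive a good simultaneously; upon exhaustion, agents receiving it switch instantly to their next non-exhausted good). $a^\sigma_{ij}$ is the total amount of good $j$ agent $i$ receives under bid profile $\sigma$. *)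

(* Defs.v *)
From HB Require Import structures.
From mathcomp Require Import all_boot all_order all_algebra all_fingroup.
Set Implicit Arguments. Unset Strict Implicit. Unset Printing Implicit Defensive.
Import Order.TTheory GRing.Theory Num.Theory.
Local Open Scope ring_scope.

(* Goods are 'I_m, agents are 'I_n.  A preference list / bid is a permutation
   s : {perm 'I_m}; s k is the good at rank k (rank 0 = most preferred). *)

Section SG.
Variables (R : realFieldType) (n m : nat).

Definition lex_pref (p : {perm 'I_m}) (a b : 'I_m -> R) : Prop :=
  exists k : 'I_m, (forall l : 'I_m, (l < k)%N -> a (p l) = b (p l))
                   /\ b (p k) < a (p k).

Definition cur (s : {perm 'I_m}) (E : {set 'I_m}) : option 'I_m :=
  ohead [seq x <- [seq s k | k <- enum 'I_m] | x \notin E].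

Record sg_state := SGState {
  sg_time : R;
  sg_rem : 'I_m -> R;
  sg_alloc : 'I_n -> 'I_m -> R;
  sg_exh : {set 'I_m} }.

Variables (q : 'I_m -> R) (r : 'I_n -> R) (bid : 'I_n -> {perm 'I_m}).

Definition sg_rate (E : {set 'I_m}) (j : 'I_m) : R :=
  \sum_(i < n | cur (bid i) E == Some j) r i.

(* One phase of the synchronized eating: everybody eats its current good at
   rate r_i until the next exhaustion event (or until time 1). *)
Definition sg_step (st : sg_state) : sg_state :=
  let E := sg_exh st in
  let dt := \big[Num.min/(1 - sg_time st)]_(j < m | 0 < sg_rate E j)
              (sg_rem st j / sg_rate E j) in
  let rem' := fun j => sg_rem st j - dt * sg_rate E j in
  SGState (sg_time st + dt) rem'
    (fun i j => sg_alloc st i j + (if cur (bid i) E == Some j then dt * r i else 0))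
    (E :|: [set j | (0 < sg_rate E j) && (rem' j == 0)]).

Definition sg_init : sg_state := SGState 0 q (fun _ _ => 0) set0.

(* Each phase before time 1 exhausts at least one good, so m+1 phases suffice
   to reach time 1; further phases are no-ops. *)
Definition SG_alloc : 'I_n -> 'I_m -> R := sg_alloc (iter m.+1 sg_step sg_init).

End SG.

(* Main.v *)
Require Import Defs.
From HB Require Import structures.
From mathcomp Require Import all_boot all_order all_algebra all_fingroup.
From Stdlib Require Import FunctionalExtensionality.
From mathcomp Require Import ring lra zify.
Import Order.TTheory GRing.Theory Num.Theory.
Local Open Scope ring_scope.

Module Aux.
Set Implicit Arguments. Unset Strict Implicit. Unset Printing Implicit Defensive.


Lemma ohead_filter_sub (T : eqType) (L : seq T) (p1 p2 : pred T) j :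
  ohead (filter p1 L) = Some j -> (forall x, p2 x -> p1 x) -> p2 j ->
  ohead (filter p2 L) = Some j.
Proof.
elim: L => //= a L IH.
case: ifP => p1a /=.
  by case=> <- sub p2a; rewrite p2a.
move=> H sub p2j; case: ifP => p2a /=; last exact: IH.
by move: (sub _ p2a); rewrite p1a.
Qed.

Lemma ohead_filter_mem (T : eqType) (L : seq T) (p : pred T) j :
  ohead (filter p L) = Some j -> p j.
Proof.
elim: L => //= a L IH; case: ifP => pa //=; by [case=> <-|].
Qed.

Lemma ohead_filter_before (T : eqType) (L : seq T) (p : pred T) j x0 i :
  ohead (filter p L) = Some j -> (i < index j L)%N -> ~~ p (nth x0 L i).
Proof.
elim: L i => //= a L IH i.
case: ifP => pa /=.
  by case=> <-; rewrite eqxx.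
move=> H; have pj := ohead_filter_mem H.
have -> : (a == j) = false by apply/negbTE; apply: contraFN pa => /eqP ->.
case: i => [|i] /=; first by rewrite pa.
by rewrite ltnS; apply: IH.
Qed.

Section Cur.
Variable m : nat.
Implicit Types (s : {perm 'I_m}) (E : {set 'I_m}).

Lemma cur_notin s E j : cur s E = Some j -> j \notin E.
Proof. exact: ohead_filter_mem. Qed.

Lemma cur_sub s E1 E2 j : cur s E1 = Some j -> E1 \subset E2 -> j \notin E2 ->
  cur s E2 = Some j.
Proof.
move=> H sub nj; apply: (ohead_filter_sub H) => // x; apply: contra.
by move/subsetP: sub; apply.
Qed.

Lemma cur_before s E j (l : 'I_m) : cur s E = Some j -> (l < s^-1 j)%N%g ->
  s l \in E.
Proof.
move=> H lt.
have L1 : index j [seq s k | k <- enum 'I_m] = (s^-1)%g j.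
  by rewrite -{1}(permKV s j) index_map ?index_enum_ord //; exact: perm_inj.
have := ohead_filter_before l H; rewrite L1 => /(_ l lt).
by rewrite (nth_map l) ?size_enum_ord ?nth_ord_enum // negbK.
Qed.

Lemma cur_None s E : cur s E = None -> forall g, g \in E.
Proof.
move=> H g; apply/negPn/negP => ng.
have : g \in [seq x <- [seq s k | k <- enum 'I_m] | x \notin E].
  rewrite mem_filter ng /= -{1}(permKV s g); apply: map_f; exact: mem_enum.
rewrite /cur in H; case: [seq x <- _ | _] H => //.
Qed.

Lemma cur_None2 s1 s2 E : cur s1 E = None -> cur s2 E = None.
Proof.
move=> /cur_None H; rewrite /cur.
suff -> : [seq x <- [seq s2 k | k <- enum 'I_m] | x \notin E] = [::] by [].
apply/eqP; rewrite -[_ == _]negbK -has_filter; apply/hasPn => x _.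
by rewrite H.
Qed.

End Cur.


Section Run.
Variables (R : realFieldType) (n m : nat).
Variables (q : 'I_m -> R) (r : 'I_n -> R) (bid : 'I_n -> {perm 'I_m}).
Hypotheses (hq : forall j, 0 < q j) (hr : forall i, 0 < r i).

Definition st k := iter k (sg_step r bid) (sg_init n q).
Definition tm k := sg_time (st k).
Definition Ex k := sg_exh (st k).
Definition rm k := sg_rem (st k).
Definition al k := sg_alloc (st k).
Definition rho k B j := if cur (bid B) (Ex k) == Some j then r B else 0.
Definition rate k j := sg_rate r bid (Ex k) j.
Definition dt k := \big[Num.min/(1 - tm k)]_(j < m | 0 < rate k j) (rm k j / rate k j).

Lemma rateE k j : rate k j = \sum_B rho k B j.
Proof. by rewrite /rate /sg_rate big_mkcond. Qed.

Lemma rho_ge0 k B j : 0 <= rho k B j.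
Proof. by rewrite /rho; case: ifP => _ //; exact: ltW. Qed.

Lemma rho_le k B j : rho k B j <= r B.
Proof. by rewrite /rho; case: ifP => _ //; exact: ltW. Qed.

Lemma rate_ge0 k j : 0 <= rate k j.
Proof. by rewrite rateE sumr_ge0 // => B _; exact: rho_ge0. Qed.

Lemma tmS k : tm k.+1 = tm k + dt k.
Proof. by []. Qed.

Lemma rmS k j : rm k.+1 j = rm k j - dt k * rate k j.
Proof. by []. Qed.

Lemma alS k B j : al k.+1 B j = al k B j + dt k * rho k B j.
Proof. by rewrite /al /= /rho; case: ifP => _; rewrite ?mulr0. Qed.

Lemma ExS k : Ex k.+1 = Ex k :|: [set j | (0 < rate k j) && (rm k.+1 j == 0)].
Proof. by []. Qed.

Lemma Ex_sub k : Ex k \subset Ex k.+1.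
Proof. by rewrite ExS subsetUl. Qed.

Lemma Ex_mono k k' : (k <= k')%N -> Ex k \subset Ex k'.
Proof.
move=> /subnK <-; elim: (k' - k)%N => [|d IH] //.
by rewrite addSn (subset_trans IH) // Ex_sub.
Qed.

Lemma rho_in k B j : j \in Ex k -> rho k B j = 0.
Proof.
rewrite /rho; case: eqP => // /cur_notin H jE; by rewrite jE in H.
Qed.

Lemma rate_pos_notin k j : 0 < rate k j -> j \notin Ex k.
Proof.
apply: contraTN => jE; rewrite rateE big1 ?ltxx // => B _; exact: rho_in.
Qed.

Definition Inv k := [/\ 0 <= tm k, tm k <= 1,
  (forall j, j \in Ex k -> rm k j = 0) & (forall j, j \notin Ex k -> 0 < rm k j)].

Lemma rm_ge0_of k : Inv k -> forall j, 0 <= rm k j.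
Proof.
case=> _ _ H1 H2 j; case: (boolP (j \in Ex k)) => jE.
  by rewrite H1. by rewrite ltW // H2.
Qed.

Lemma dt_le1 k : dt k <= 1 - tm k.
Proof. exact: bigmin_le_id. Qed.

Lemma dt_le_j k j : 0 < rate k j -> dt k <= rm k j / rate k j.
Proof. move=> H; exact: (bigmin_le_cond _ (P := fun j => 0 < rate k j)). Qed.

Lemma dt_ge0 k : Inv k -> 0 <= dt k.
Proof.
move=> I; have [h0 h1 _ _] := I.
apply/bigmin_geP; split; first by rewrite subr_ge0.
move=> j rp; apply: divr_ge0; [exact: (rm_ge0_of I)|exact: ltW].
Qed.

Lemma dt_pos k : Inv k -> tm k < 1 -> 0 < dt k.
Proof.
move=> [h0 h1 H1 H2] lt1; apply/bigmin_gtP; split; first by rewrite subr_gt0.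
move=> j rp; rewrite divr_gt0 // H2 //; exact: rate_pos_notin.
Qed.

Lemma dt_cases k : dt k = 1 - tm k \/ exists2 j, 0 < rate k j & dt k = rm k j / rate k j.
Proof.
rewrite /dt; elim/big_ind: _ => [|x y Hx Hy|j rp]; [by left| |by right; exists j].
by rewrite /Num.min; case: ifP.
Qed.

Lemma Inv_all k : Inv k.
Proof.
elim: k => [|k IH].
  split => //=; try exact: ler01; first (by move=> j; rewrite inE); by move=> j _; exact: hq.
have I := IH; case: IH => h0 h1 H1 H2.
have d0 := dt_ge0 I; have d1 := dt_le1 k.
split.
- by rewrite tmS addr_ge0.
- by rewrite tmS -lerBrDl.
- move=> j; rewrite ExS inE => /orP [jE|]; last by rewrite inE => /andP [_ /eqP].
  by rewrite rmS H1 // rateE big1 ?mulr0 ?subr0 // => B _; exact: rho_in.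
- move=> j; rewrite ExS inE negb_or inE => /andP [jE].
  rewrite negb_and -leNgt rmS => /orP [rle|nz].
  + have r0 : rate k j = 0 by apply/eqP; rewrite eq_le rle rate_ge0.
    by rewrite r0 mulr0 subr0 H2.
  + rewrite lt_neqAle eq_sym nz /=.
    have [rp|] := ltP 0 (rate k j).
    * rewrite subr_ge0 -ler_pdivlMr //; exact: dt_le_j.
    * move=> rle; have r0 : rate k j = 0 by apply/eqP; rewrite eq_le rle rate_ge0.
      by rewrite r0 mulr0 subr0 ltW ?H2.
Qed.

Lemma tm_le k : tm k <= tm k.+1.
Proof. by rewrite tmS lerDl (dt_ge0 (Inv_all k)). Qed.

Lemma tm_mono k k' : (k <= k')%N -> tm k <= tm k'.
Proof.
move=> /subnK <-; elim: (k' - k)%N => [|d IH] //.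
by rewrite addSn (le_trans IH) // tm_le.
Qed.

Lemma tm_lt k : tm k < 1 -> tm k < tm k.+1.
Proof. by move=> lt; rewrite tmS ltrDl (dt_pos (Inv_all k)). Qed.

Lemma tm0 : tm 0 = 0. Proof. by []. Qed.
Lemma tm_ge0 k : 0 <= tm k. Proof. by case: (Inv_all k). Qed.
Lemma tm_le1 k : tm k <= 1. Proof. by case: (Inv_all k). Qed.

Lemma dt_one k : tm k = 1 -> dt k = 0.
Proof.
move=> t1; apply/eqP; rewrite eq_le (dt_ge0 (Inv_all k)) andbT.
by rewrite (le_trans (dt_le1 k)) // t1 subrr.
Qed.

Lemma tm_card k : tm k = 1 \/ (k <= #|Ex k|)%N.
Proof.
elim: k => [|k [t1|IH]]; first by right.
  by left; rewrite tmS dt_one // t1 addr0.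
case: (dt_cases k) => [d1|[j rp dj]].
  by left; rewrite tmS d1 addrC subrK.
right; apply: (leq_ltn_trans IH); apply: proper_card.
rewrite properEneq Ex_sub andbT; apply/negP => /eqP E.
have : j \in Ex k.+1.
  rewrite ExS inE; apply/orP; right; rewrite inE rp /= rmS dj.
  by rewrite mulfVK ?subrr // gt_eqF.
by rewrite -E; apply/negP; exact: rate_pos_notin.
Qed.

Lemma tmM : tm m.+1 = 1.
Proof.
case: (tm_card m.+1) => // H; exfalso.
by move: (leq_trans H (max_card _)); rewrite card_ord ltnn.
Qed.

Lemma al0 B j : al 0 B j = 0. Proof. by []. Qed.

Lemma cons k j : rm k j + \sum_B al k B j = q j.
Proof.
elim: k => [|k IH]; first by rewrite /rm /al /= big1 ?addr0.
rewrite rmS -IH; under eq_bigr do rewrite alS.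
rewrite big_split /= -mulr_sumr -rateE. ring.
Qed.

Lemma al_frozen k k' B j : j \in Ex k -> (k <= k')%N -> al k' B j = al k B j.
Proof.
move=> jE /subnK <-; elim: (k' - k)%N => [|d IH] //.
rewrite addSn alS IH rho_in ?mulr0 ?addr0 //.
by move/subsetP: (Ex_mono (leq_addl d k)); apply.
Qed.

Definition M := m.+1.
Definition len k x := Num.max 0 (Num.min x (tm k.+1) - tm k).
Definition Int (f : nat -> R) x := \sum_(0 <= k < M) f k * len k x.

Lemma dt_def k : dt k = tm k.+1 - tm k.
Proof. by rewrite tmS addrC addKr. Qed.

Lemma len_full k x : tm k.+1 <= x -> len k x = dt k.
Proof.
move=> H; rewrite /len (min_r H) -dt_def max_r //; exact: dt_ge0 (Inv_all k).
Qed.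

Lemma len_zero k x : x <= tm k -> len k x = 0.
Proof.
move=> H; rewrite /len max_l // subr_le0 (le_trans _ H) // ge_min lexx //.
Qed.

Lemma len_mid k x : tm k <= x -> x <= tm k.+1 -> len k x = x - tm k.
Proof. by move=> H1 H2; rewrite /len (min_l H2) max_r // subr_ge0. Qed.

Lemma len_ge0 k x : 0 <= len k x.
Proof. by rewrite /len le_max lexx. Qed.

Lemma len_le_dt k x : len k x <= dt k.
Proof.
rewrite /len ge_max (dt_ge0 (Inv_all k)) /= dt_def lerB //; by rewrite ge_min lexx orbT.
Qed.

Lemma len_mono k x y : x <= y -> len k x <= len k y.
Proof.
move=> H; rewrite /len ge_max !le_max lexx /=; apply/orP; right; apply: lerB => //.
by rewrite le_min !ge_min H lexx !orbT.
Qed.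

Lemma Int_lin (f : nat -> R) p x : (p < M)%N -> tm p <= x -> x <= tm p.+1 ->
  Int f x = \sum_(0 <= k < p) f k * dt k + (x - tm p) * f p.
Proof.
move=> pM H1 H2; rewrite /Int (big_cat_nat (n := p)) //=; last exact: ltnW.
rewrite big_nat_recl //= len_mid // mulrC.
have Z : \sum_(p <= i < m) f i.+1 * len i.+1 x = 0.
  rewrite big_nat big1 // => k /andP [pk _].
  rewrite len_zero ?mulr0 // (le_trans H2) // tm_mono //; exact: ltnW.
rewrite Z addr0.
congr (_ + _); apply: eq_big_nat => k /andP [_ kp]; rewrite len_full //.
by rewrite (le_trans _ H1) // tm_mono.
Qed.

Lemma Int_at (f : nat -> R) p : (p <= M)%N ->
  Int f (tm p) = \sum_(0 <= k < p) f k * dt k.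
Proof.
rewrite leq_eqVlt => /orP [/eqP ->|pM].
  rewrite /Int; apply: eq_big_nat => k /andP [_ kp]; rewrite len_full //.
  exact: tm_mono.
by rewrite (Int_lin f pM) ?subrr ?mul0r ?addr0 // tm_le.
Qed.

Lemma Int_lin2 (f : nat -> R) p x : (p < M)%N -> tm p <= x -> x <= tm p.+1 ->
  Int f x = Int f (tm p) + (x - tm p) * f p.
Proof. by move=> pM H1 H2; rewrite (Int_lin f pM) // Int_at // ltnW. Qed.

Lemma Int_mono (f : nat -> R) x y : (forall k, 0 <= f k) -> x <= y -> Int f x <= Int f y.
Proof.
move=> f0 H; rewrite /Int; apply: ler_sum => k _; apply: ler_wpM2l => //.
exact: len_mono.
Qed.

Lemma Int_ge0 (f : nat -> R) x : (forall k, 0 <= f k) -> 0 <= Int f x.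
Proof. by move=> f0; apply: sumr_ge0 => k _; rewrite mulr_ge0 // len_ge0. Qed.

Lemma Int_le_full (f : nat -> R) x : (forall k, 0 <= f k) -> Int f x <= Int f (tm M).
Proof.
move=> f0; rewrite Int_at //; rewrite /Int; apply: ler_sum => k _.
by rewrite ler_wpM2l // len_le_dt.
Qed.

Lemma Int_zero (f : nat -> R) : Int f 0 = 0.
Proof. by rewrite -tm0 Int_at // big_nil. Qed.

Lemma phase_find x : 0 <= x -> x < 1 ->
  exists p, [/\ (p < M)%N, tm p <= x & x < tm p.+1].
Proof.
move=> x0 x1.
have ex : exists k, (M <= k)%N || (x < tm k) by exists M; rewrite leqnn.
case: (ex_minnP ex) => k Pk kmin.
have kM : (k <= M)%N by apply: kmin; rewrite leqnn.
case: k Pk kmin kM => [|p] Pk kmin kM.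
  by move: Pk; rewrite tm0 ltNge x0 orbF.
exists p; split; first exact: kM.
- rewrite leNgt; apply/negP => lt.
  have : (p.+1 <= p)%N by apply: kmin; rewrite lt orbT.
  by rewrite ltnn.
- move: Pk => /orP [|//]; rewrite /M => Mp.
  have -> : p = m by move: kM Mp; rewrite /M; lia.
  by rewrite -/M tmM.
Qed.

Lemma Int_one_at p : (p <= M)%N -> Int (fun _ => 1) (tm p) = tm p.
Proof.
move=> pM; rewrite Int_at //; clear pM; elim: p => [|p IH]; first by rewrite big_nil.
by rewrite big_nat_recr //= IH mul1r tmS.
Qed.

Lemma Int_one x : 0 <= x -> x <= 1 -> Int (fun _ => 1) x = x.
Proof.
move=> x0; rewrite le_eqVlt => /orP [/eqP ->|x1];   have E := Int_one_at (leqnn M).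
  have tM : tm M = 1 by exact: tmM.
  by rewrite tM in E.
case: (phase_find x0 x1) => p [pM H1 H2].
rewrite (Int_lin2 _ pM H1 (ltW H2)) (Int_one_at (ltnW pM)) mulr1 addrC subrK //.
Qed.

Lemma Int_diff (f : nat -> R) c x y : (forall k, 0 <= f k) -> (forall k, f k <= c) ->
  0 <= x -> x <= y -> y <= 1 -> Int f y - Int f x <= c * (y - x).
Proof.
move=> f0 fc x0 xy y1.
rewrite -{2}(Int_one x0 (le_trans xy y1)) -{2}(Int_one (le_trans x0 xy) y1).
rewrite /Int -!sumrB mulr_sumr; apply: ler_sum => k _.
rewrite !mul1r -!mulrBr; apply: ler_wpM2r; last exact: fc.
by rewrite subr_ge0 len_mono.
Qed.

Definition Al B j x := Int (fun k => rho k B j) x.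

Lemma Al_at B j p : (p <= M)%N -> Al B j (tm p) = al p B j.
Proof.
move=> pM; rewrite /Al Int_at //; elim: p pM => [|p IH] pM; first by rewrite big_nil.
by rewrite big_nat_recr // IH ?(ltnW pM) // alS mulrC.
Qed.

Lemma Al_ge0 B j x : 0 <= Al B j x.
Proof. apply: Int_ge0 => k; exact: rho_ge0. Qed.

Lemma Al_mono B j x y : x <= y -> Al B j x <= Al B j y.
Proof. apply: Int_mono => k; exact: rho_ge0. Qed.

Lemma Al_lin B j p x : (p < M)%N -> tm p <= x -> x <= tm p.+1 ->
  Al B j x = al p B j + (x - tm p) * rho p B j.
Proof.
move=> pM H1 H2; rewrite /Al (Int_lin2 _ pM H1 H2).
by have := Al_at B j (ltnW pM); rewrite /Al => ->.
Qed.

Lemma Al_diff B j x y : 0 <= x -> x <= y -> y <= 1 -> Al B j y - Al B j x <= r B * (y - x).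
Proof. apply: Int_diff => k; [exact: rho_ge0 | exact: rho_le]. Qed.

Definition C j x := \sum_B Al B j x.

Lemma C_at j p : (p <= M)%N -> C j (tm p) = q j - rm p j.
Proof.
move=> pM; rewrite /C; under eq_bigr do rewrite Al_at //.
by rewrite -(cons p j) addrC addKr.
Qed.

Lemma C_mono j x y : x <= y -> C j x <= C j y.
Proof. move=> H; apply: ler_sum => B _; exact: Al_mono. Qed.

Lemma C_le j x : C j x <= q j.
Proof.
rewrite /C (le_trans (y := C j (tm M))) //.
  apply: ler_sum => B _; exact: Int_le_full (fun k => rho_ge0 k B j).
rewrite C_at // gerBl; exact: rm_ge0_of (Inv_all _) _.
Qed.

Lemma C_lin j p x : (p < M)%N -> tm p <= x -> x <= tm p.+1 ->
  C j x = q j - rm p j + (x - tm p) * rate p j.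
Proof.
move=> pM H1 H2; rewrite -(C_at j (ltnW pM)) /C rateE mulr_sumr -big_split.
apply: eq_bigr => B _; rewrite (Al_lin _ _ pM H1 H2) (Al_at _ _ (ltnW pM)) //.
Qed.

Lemma C_in j p x : (p <= M)%N -> j \in Ex p -> tm p <= x -> C j x = q j.
Proof.
move=> pM jE H; apply/eqP; rewrite eq_le C_le /= (le_trans _ (C_mono j H)) //.
by case: (Inv_all p) => _ _ H0 _; rewrite C_at // H0 // subr0.
Qed.

Lemma C_char j p x : (p < M)%N -> tm p <= x -> x < tm p.+1 -> C j x = q j -> j \in Ex p.
Proof.
move=> pM H1 H2 Cq; apply/negPn/negP => jn.
case: (Inv_all p) => _ _ _ Hpos; have rp0 := Hpos j jn.
have E : (x - tm p) * rate p j = rm p j.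
  move: Cq; rewrite (C_lin j pM H1 (ltW H2)); move: ((x - tm p) * rate p j) => a; lra.
have [rp|] := ltP 0 (rate p j).
  have : (x - tm p) * rate p j < rm p j.
    rewrite -ltr_pdivlMr //; apply: lt_le_trans (dt_le_j rp).
    by rewrite dt_def ltrBlDr subrK.
  by rewrite E ltxx.
move=> rle; have r0 : rate p j = 0 by apply/eqP; rewrite eq_le rle rate_ge0.
by move: E; rewrite r0 mulr0 => E; move: rp0; rewrite -E ltxx.
Qed.


Lemma one_frozen k d : tm k = 1 -> tm (k + d) = 1 /\ (forall B j, al (k + d) B j = al k B j).
Proof.
move=> t1; elim: d => [|d [IH1 IH2]]; first by rewrite addn0.
rewrite addnS; split; first by rewrite tmS dt_one // IH1 addr0.
by move=> B j; rewrite alS dt_one // mul0r addr0 IH2.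
Qed.

Lemma Al_phase B j p x y : (p < M)%N -> tm p <= x -> x <= y -> y <= tm p.+1 ->
  Al B j y - Al B j x = (y - x) * rho p B j.
Proof.
move=> pM H1 H2 H3; rewrite (Al_lin B j pM H1 (le_trans H2 H3)).
rewrite (Al_lin B j pM (le_trans H1 H2) H3); ring.
Qed.

Lemma C_phase j p x y : (p < M)%N -> tm p <= x -> x <= y -> y <= tm p.+1 ->
  C j y - C j x = (y - x) * rate p j.
Proof.
move=> pM H1 H2 H3; rewrite /C -sumrB rateE mulr_sumr; apply: eq_bigr => B _.
exact: Al_phase.
Qed.

End Run.

Lemma step_eq (R : realFieldType) n m (r : 'I_n -> R) (b1 b2 : 'I_n -> {perm 'I_m})
  (s : sg_state R n m) :
  (forall B, cur (b1 B) (sg_exh s) = cur (b2 B) (sg_exh s)) ->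
  sg_step r b1 s = sg_step r b2 s.
Proof.
move=> H.
have Hr : sg_rate r b1 (sg_exh s) = sg_rate r b2 (sg_exh s).
  apply: functional_extensionality => j; rewrite /sg_rate.
  by apply: eq_bigl => B; rewrite H.
rewrite /sg_step Hr; congr SGState.
apply: functional_extensionality => B; apply: functional_extensionality => j.
by rewrite H.
Qed.


Section Main.
Variables (R : realFieldType) (n m : nat) (q : 'I_m -> R) (r : 'I_n -> R).
Hypotheses (hq : forall j, 0 < q j) (hr : forall i, 0 < r i)
  (hmm : forall i j, r i <= q j).
Variables (bP bS : 'I_n -> {perm 'I_m}) (i : 'I_n) (k0 : nat) (h : 'I_m).
Hypotheses (hb : forall B, B != i -> bS B = bP B) (hk0 : (k0 <= m)%N)
  (hst : st q r bS k0 = st q r bP k0) (hcP : cur (bP i) (Ex q r bP k0) = Some h)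
  (hcS : cur (bS i) (Ex q r bS k0) != Some h) (htau : tm q r bP k0 < 1).
Variable k1 : nat.
Hypotheses (hk1M : (k1 <= M m)%N) (hk1lt : forall k, (k < k1)%N -> h \notin Ex q r bP k)
  (hk1in : (k1 < M m)%N -> h \in Ex q r bP k1).

Local Notation tP := (tm q r bP).
Local Notation tS := (tm q r bS).
Local Notation EP := (Ex q r bP).
Local Notation ES := (Ex q r bS).
Local Notation AP := (Al q r bP).
Local Notation AS := (Al q r bS).
Local Notation CP := (C q r bP).
Local Notation CS := (C q r bS).
Local Notation rhoP := (rho q r bP).
Local Notation rhoS := (rho q r bS).
Local Notation alP_ := (al q r bP).
Local Notation alS_ := (al q r bS).
Local Notation MM := (M m).

Definition tau := tP k0.
Definition e := tP k1.
Definition A := alP_ k0 i h.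

Lemma tauS : tS k0 = tau. Proof. by rewrite /tau /tm hst. Qed.
Lemma ES0 : ES k0 = EP k0. Proof. by rewrite /Ex hst. Qed.
Lemma alS0 : alS_ k0 = alP_ k0. Proof. by rewrite /al hst. Qed.
Lemma rmS0 : rm q r bS k0 = rm q r bP k0. Proof. by rewrite /rm hst. Qed.

Lemma k0M : (k0 < MM)%N. Proof. by rewrite /M ltnS. Qed.

Lemma hnotin0 : h \notin EP k0. Proof. exact: cur_notin hcP. Qed.

Lemma k0k1 : (k0 < k1)%N.
Proof.
rewrite ltnNge; apply/negP => le.
have := hk1in (leq_ltn_trans le k0M) => hin.
move/subsetP: (Ex_mono q r bP le) => /(_ h hin).
by apply/negP; exact: hnotin0.
Qed.

Lemma curP k : (k0 <= k)%N -> (k < k1)%N -> cur (bP i) (EP k) = Some h.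
Proof. move=> H1 H2; apply: cur_sub hcP _ (hk1lt H2); exact: Ex_mono. Qed.

Lemma alP_run d : (k0 + d <= k1)%N -> alP_ (k0 + d) i h = A + r i * (tP (k0 + d) - tau).
Proof.
elim: d => [|d IH] H; first by rewrite addn0 /tau subrr mulr0 addr0.
have H' : (k0 + d <= k1)%N by rewrite addnS in H; exact: ltnW.
rewrite addnS alS IH // tmS /rho curP ?leq_addr //; first (rewrite eqxx; ring).
by rewrite addnS in H.
Qed.

Lemma aP : alP_ MM i h = A + r i * (e - tau).
Proof.
have := alP_run (d := (k1 - k0)%N); rewrite subnKC ?(ltnW k0k1) // => /(_ (leqnn _)) <-.
move: hk1M; rewrite leq_eqVlt => /orP [/eqP ->|lt] //.
apply: al_frozen; [exact: hk1in | exact: ltnW].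
Qed.

Lemma tP_step : tau < tP k0.+1.
Proof. exact: (@tm_lt _ _ _ _ _ bP hq hr). Qed.

Lemma tS_step : tau < tS k0.+1.
Proof. rewrite -tauS; apply: (@tm_lt _ _ _ _ _ bS hq hr); by rewrite tauS. Qed.

Lemma e_gt : tau < e.
Proof. apply: (lt_le_trans tP_step); apply: (@tm_mono _ _ _ _ _ bP hq hr); exact: k0k1. Qed.

Lemma e_le1 : e <= 1. Proof. exact: (@tm_le1 _ _ _ _ _ bP hq hr). Qed.
Lemma tau_ge0 : 0 <= tau. Proof. exact: (@tm_ge0 _ _ _ _ _ bP hq hr). Qed.

Lemma A_le : A <= r i * tau.
Proof.
have := @Al_diff _ _ _ _ _ bP hq hr i h _ _ (lexx 0) tau_ge0 (ltW htau).
rewrite /Al Int_zero // subr0 subr0 -/(Al q r bP i h tau) /tau Al_at //.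
exact: ltnW k0M.
Qed.

Lemma alS1 : alS_ k0.+1 i h = A.
Proof.
rewrite alS alS0 /rho; case: eqP => [E|_]; last by rewrite mulr0 addr0.
by move: hcS; rewrite E eqxx.
Qed.

Lemma S_bound x : tau < x -> x <= 1 -> AS i h x < A + r i * (x - tau).
Proof.
move=> H1 H2; have [le|lt] := leP x (tS k0.+1).
  rewrite (@Al_lin _ _ _ _ _ bS hq hr i h _ _ k0M) ?tauS ?(ltW H1) //.
  rewrite /rho; case: eqP => [E|_]; first by move: hcS; rewrite E eqxx.
  by rewrite mulr0 addr0 alS0 -/A ltrDl mulr_gt0 // subr_gt0.
have := @Al_diff _ _ _ _ _ bS hq hr i h _ _ (@tm_ge0 _ _ _ _ _ bS hq hr _) (ltW lt) H2.
rewrite (@Al_at _ _ _ _ _ bS hq hr i h k0.+1); last by rewrite /M; lia.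
rewrite alS1 => H; apply: (le_lt_trans (y := A + r i * (x - tS k0.+1))).
  by rewrite -lerBlDl.
by rewrite ltrD2l ltr_pM2l // ltrD2l ltrN2 tS_step.
Qed.


Definition OP t := \sum_(B | B != i) AP B h t.
Definition OS t := \sum_(B | B != i) AS B h t.
Definition Mon t := (forall j, j != h -> CP j t <= CS j t) /\ (CS h t < q h -> OP t <= OS t).

Lemma Mon_tau : Mon tau.
Proof.
have tP0 : tP k0 = tau by [].
split.
- move=> j _; rewrite -{1}tP0 -tauS (@C_at _ _ _ _ _ bP hq hr j k0 (ltnW k0M)).
  by rewrite (@C_at _ _ _ _ _ bS hq hr j k0 (ltnW k0M)) rmS0.
- move=> _; rewrite /OP /OS; apply: ler_sum => B _.
  rewrite -{1}tP0 -tauS (@Al_at _ _ _ _ _ bP hq hr B h k0 (ltnW k0M)).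
  by rewrite (@Al_at _ _ _ _ _ bS hq hr B h k0 (ltnW k0M)) alS0.
Qed.

Lemma O_phase (b : 'I_n -> {perm 'I_m}) p x y : (p < MM)%N ->
  tm q r b p <= x -> x <= y -> y <= tm q r b p.+1 ->
  \sum_(B | B != i) Al q r b B h y - \sum_(B | B != i) Al q r b B h x =
  (y - x) * \sum_(B | B != i) rho q r b p B h.
Proof.
move=> pM H1 H2 H3; rewrite -sumrB mulr_sumr; apply: eq_bigr => B _.
exact: (@Al_phase _ _ _ _ _ b hq hr).
Qed.

Lemma Step s t p b : tau <= s -> s < t -> t <= e -> Mon s ->
  (p < MM)%N -> tS p <= s -> t <= tS p.+1 ->
  (b < MM)%N -> tP b <= s -> t <= tP b.+1 -> Mon t.
Proof.
move=> Hs st te Ms pM Sp1 Sp2 bM Pb1 Pb2.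
have k0b : (k0 <= b)%N.
  rewrite leqNgt; apply/negP => lt.
  have : tP b.+1 <= tau by apply: (@tm_mono _ _ _ _ _ bP hq hr).
  by move=> H; have := lt_le_trans st (le_trans Pb2 (le_trans H Hs)); rewrite ltxx.
have bk1 : (b < k1)%N.
  rewrite ltnNge; apply/negP => le.
  have : e <= tP b by apply: (@tm_mono _ _ _ _ _ bP hq hr).
  by move=> H; have := lt_le_trans st (le_trans te (le_trans H Pb1)); rewrite ltxx.
have hnb := hk1lt bk1.
have cPb := curP k0b bk1.
have sub : EP b \subset ES p.
  apply/subsetP => g gE.
  have gh : g != h by apply: contraTneq gE => ->.
  have Cg : CP g s = q g by apply: (@C_in _ _ _ _ _ bP hq hr g b s) => //; exact: ltnW.
  have Cs : CS g s = q g.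
    apply/eqP; rewrite eq_le (@C_le _ _ _ _ _ bS hq hr) -Cg; exact: Ms.1.
  exact: (@C_char _ _ _ _ _ bS hq hr g p s pM Sp1 (lt_le_trans st Sp2) Cs).
have rcmp : forall B j, j \notin ES p -> (B != i) || (j != h) -> rhoP b B j <= rhoS p B j.
  move=> B j jn Bj; rewrite /rho; case: eqP => [E|_]; last first.
    by case: ifP => _ //; exact: ltW.
  case: (eqVneq B i) E Bj => [-> E /= jh|Bi E _].
    by move: E; rewrite cPb => -[E]; move: jh; rewrite E eqxx.
  by rewrite hb // (cur_sub E sub jn) eqxx.
have st' := ltW st.
split.
- move=> j jh; case: (boolP (j \in ES p)) => jE.
  + rewrite (@C_in _ _ _ _ _ bS hq hr j p t (ltnW pM) jE (le_trans Sp1 st')).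
    exact: (@C_le _ _ _ _ _ bP hq hr).
  + have dP := @C_phase _ _ _ _ _ bP hq hr j b s t bM Pb1 st' Pb2.
    have dS := @C_phase _ _ _ _ _ bS hq hr j p s t pM Sp1 st' Sp2.
    have rle : rate q r bP b j <= rate q r bS p j.
      rewrite !rateE; apply: ler_sum => B _; apply: rcmp => //; by rewrite jh orbT.
    have := Ms.1 j jh; move: dP dS rle.
    set a := CP j t; set a' := CP j s; set c := CS j t; set c' := CS j s.
    move=> dP dS rle H.
    have : (t - s) * rate q r bP b j <= (t - s) * rate q r bS p j.
      by apply: ler_wpM2l => //; rewrite subr_ge0.
    lra.
- move=> Ch.
  have hE : h \notin ES p.
    apply/negP => hE; move: Ch; rewrite (@C_in _ _ _ _ _ bS hq hr h p t (ltnW pM) hE (le_trans Sp1 st')).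
    by rewrite ltxx.
  have Os := Ms.2 (le_lt_trans (@C_mono _ _ _ _ _ bS hr h _ _ st') Ch).
  have dP := O_phase bM Pb1 st' Pb2; have dS := O_phase pM Sp1 st' Sp2.
  have rle : \sum_(B | B != i) rhoP b B h <= \sum_(B | B != i) rhoS p B h.
    apply: ler_sum => B Bi; apply: rcmp => //; by rewrite Bi.
  have : (t - s) * \sum_(B | B != i) rhoP b B h <= (t - s) * \sum_(B | B != i) rhoS p B h.
    by apply: ler_wpM2l => //; rewrite subr_ge0.
  move: Os dP dS; rewrite /OP /OS.
  move: (\sum_(B | B != i) AP B h t) (\sum_(B | B != i) AP B h s).
  move: (\sum_(B | B != i) AS B h t) (\sum_(B | B != i) AS B h s).
  move: ((t - s) * \sum_(B | B != i) rhoP b B h) ((t - s) * \sum_(B | B != i) rhoS p B h).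
  move=> u v w x y z; lra.
Qed.


Definition cnt t := (#|[set k : 'I_MM.+1 | (tP k < t)%R]| + #|[set k : 'I_MM.+1 | (tS k < t)%R]|)%N.

Lemma bigmax_attain (I : finType) (P : pred I) (F : I -> R) x0 :
  \big[Num.max/x0]_(k | P k) F k = x0 \/ exists2 k, P k & \big[Num.max/x0]_(k | P k) F k = F k.
Proof.
elim/big_ind: _ => [|x y Hx Hy|k Pk]; [by left| |by right; exists k].
rewrite /Num.max; case: ifP => _ //.
Qed.

Lemma k0o : (k0 < MM.+1)%N. Proof. by rewrite ltnS ltnW // k0M. Qed.

Lemma Mon_ind N t : (cnt t < N)%N -> tau <= t -> t <= e -> Mon t.
Proof.
elim: N t => [|N IH] t //.
move=> ct Ht te; case: (eqVneq t tau) => [->|ntau]; first exact: Mon_tau.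
have tt : tau < t by rewrite lt_neqAle eq_sym ntau.
set sP := \big[Num.max/tau]_(k < MM.+1 | tP k < t) tP k.
set sS := \big[Num.max/tau]_(k < MM.+1 | tS k < t) tS k.
set s := Num.max sP sS.
have taus : tau <= s by rewrite le_max bigmax_ge_id.
have st : s < t.
  rewrite gt_max; apply/andP; split; apply/bigmax_ltP; split => //.
have upP : forall k : 'I_MM.+1, tP k < t -> tP k <= s.
  by move=> k kt; rewrite le_max; apply/orP; left; exact: le_bigmax_cond.
have upS : forall k : 'I_MM.+1, tS k < t -> tS k <= s.
  by move=> k kt; rewrite le_max; apply/orP; right; exact: le_bigmax_cond.
have att : (exists2 k : 'I_MM.+1, tP k < t & tP k = s) \/ (exists2 k : 'I_MM.+1, tS k < t & tS k = s).
  rewrite /s /Num.max; case: ifP => _.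
  - right; case: (bigmax_attain (fun k : 'I_MM.+1 => tS k < t) (fun k : 'I_MM.+1 => tS k) tau) => [E|[k kt E]].
    + exists (Ordinal k0o) => //=; rewrite ?tauS // -/sS E tauS //.
    + by exists k.
  - left; case: (bigmax_attain (fun k : 'I_MM.+1 => tP k < t) (fun k : 'I_MM.+1 => tP k) tau) => [E|[k kt E]].
    + by exists (Ordinal k0o) => //=; rewrite -/sP E.
    + by exists k.
have subP : [set k : 'I_MM.+1 | tP k < s] \subset [set k : 'I_MM.+1 | tP k < t].
  by apply/subsetP => k; rewrite !inE => /lt_trans; apply.
have subS : [set k : 'I_MM.+1 | tS k < s] \subset [set k : 'I_MM.+1 | tS k < t].
  by apply/subsetP => k; rewrite !inE => /lt_trans; apply.
have cs : (cnt s < cnt t)%N.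
  rewrite /cnt; case: att => [[k kt ks]|[k kt ks]].
  - apply: leq_ltn_trans (leq_add (leqnn _) (subset_leq_card subS)) _.
    rewrite ltn_add2r; apply: proper_card; rewrite properE subP /=.
    apply/subsetPn; exists k; rewrite !inE ?kt // ks ltxx //.
  - apply: leq_ltn_trans (leq_add (subset_leq_card subP) (leqnn _)) _.
    rewrite ltn_add2l; apply: proper_card; rewrite properE subS /=.
    apply/subsetPn; exists k; rewrite !inE ?kt // ks ltxx //.
have Ms : Mon s.
  apply: IH => //; [exact: leq_trans cs ct | exact: le_trans (ltW st) te].
have s0 : 0 <= s := le_trans tau_ge0 taus.
have s1 : s < 1 := lt_le_trans st (le_trans te e_le1).
case: (@phase_find _ _ _ _ _ bP hq hr s s0 s1) => b [bM Pb1 Pb2].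
case: (@phase_find _ _ _ _ _ bS hq hr s s0 s1) => p [pM Sp1 Sp2].
apply: (Step taus st te Ms pM Sp1 _ bM Pb1).
- rewrite leNgt; apply/negP => lt.
  have o : (p.+1 < MM.+1)%N by rewrite ltnS.
  by have := upS (Ordinal o) lt => /= /(lt_le_trans Sp2); rewrite ltxx.
- rewrite leNgt; apply/negP => lt.
  have o : (b.+1 < MM.+1)%N by rewrite ltnS.
  by have := upP (Ordinal o) lt => /= /(lt_le_trans Pb2); rewrite ltxx.
Qed.

Lemma Mon_all t : tau <= t -> t <= e -> Mon t.
Proof. exact: (@Mon_ind (cnt t).+1). Qed.


Lemma C_split (b : 'I_n -> {perm 'I_m}) x :
  C q r b h x = Al q r b i h x + \sum_(B | B != i) Al q r b B h x.
Proof. by rewrite /C (bigD1 i). Qed.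

Lemma main_lt : alS_ MM i h < alP_ MM i h.
Proof.
rewrite aP.
have tSM : tS MM = 1 := @tmM _ _ _ _ _ bS hq hr.
have tPM : tP MM = 1 := @tmM _ _ _ _ _ bP hq hr.
have aS : alS_ MM i h = AS i h 1.
  by rewrite -tSM (@Al_at _ _ _ _ _ bS hq hr i h MM (leqnn _)).
rewrite aS.
case: (eqVneq e 1) => [e1|ne1].
  rewrite e1; apply: S_bound => //; by rewrite -e1 e_gt.
have e1 : e < 1 by rewrite lt_neqAle ne1 e_le1.
have eg := e_gt; have tau0 := tau_ge0.
have k1M : (k1 < MM)%N.
  move: hk1M; rewrite leq_eqVlt => /orP [/eqP E|//].
  by move: ne1; rewrite /e E tPM eqxx.
have CPe : CP h e = q h := @C_in _ _ _ _ _ bP hq hr h k1 e (ltnW k1M) (hk1in k1M) (lexx _).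
have MonE := Mon_all (ltW eg) (lexx e).
have AiP : AP i h e = A + r i * (e - tau).
  rewrite -aP /e (@Al_at _ _ _ _ _ bP hq hr i h k1 (ltnW k1M)).
  by rewrite (@al_frozen _ _ _ _ _ bP k1 MM i h (hk1in k1M) (ltnW k1M)).
have ri := hr i.
have S1 : AS i h 1 <= q h - \sum_(B | B != i) AS B h 1.
  rewrite lerBrDr -C_split; exact: (@C_le _ _ _ _ _ bS hq hr).
case: (eqVneq (CS h e) (q h)) => [CSe|CSne].
  have H1 := @C_split bS 1; have H2 := @C_split bS e.
  have Om : \sum_(B | B != i) AS B h e <= \sum_(B | B != i) AS B h 1.
    by apply: ler_sum => B _; apply: (@Al_mono _ _ _ _ _ bS hr); exact: e_le1.
  have Cl := @C_le _ _ _ _ _ bS hq hr h 1.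
  have Sb := S_bound eg e_le1.
  move: H1 H2 Om Cl Sb; rewrite CSe.
  move: (AS i h 1) (AS i h e) (\sum_(B | B != i) AS B h e) (\sum_(B | B != i) AS B h 1) (CS h 1).
  move=> a b c d f; lra.
have CSlt : CS h e < q h by rewrite lt_neqAle CSne (@C_le _ _ _ _ _ bS hq hr).
have OPE : \sum_(B | B != i) AP B h e = q h - (A + r i * (e - tau)).
  by rewrite -AiP -CPe C_split addrC addKr.
have OPpos : 0 < \sum_(B | B != i) AP B h e.
  rewrite OPE subr_gt0; apply: (le_lt_trans (y := r i * e)).
    by have := A_le; lra.
  apply: (lt_le_trans (y := r i)); last exact: hmm.
  by rewrite gtr_pMr.
have [B [Bi ABpos]] : exists B, B != i /\ 0 < AP B h e.
  case: (pickP (fun B => (B != i) && (0 < AP B h e))) => [B /andP [H1 H2]|none].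
    by exists B.
  move: OPpos; rewrite ltNge => /negP; case.
  rewrite sumr_le0 // => B Bi; move: (none B); rewrite Bi /= => /negbT.
  by rewrite -leNgt.
have [k [kM ck tk]] : exists k, [/\ (k < MM)%N, cur (bP B) (EP k) = Some h & tP k < e].
  case: (pickP (fun k : 'I_MM => (cur (bP B) (EP k) == Some h) && (tP k < e))) => [k /andP [H1 H2]|none].
    by exists k; split => //; exact/eqP.
  move: ABpos; rewrite /Al /Int big_mkord big1 ?ltxx // => k _.
  move: (none k) => /negbT; rewrite negb_and => /orP [nc|nt].
    by rewrite /rho (negbTE nc) mul0r.
  by rewrite (@len_zero _ _ _ _ _ bP) ?mulr0 // leNgt.
have kk1 : (k < k1)%N.
  rewrite ltnNge; apply/negP => le.
  have := @tm_mono _ _ _ _ _ bP hq hr _ _ le; rewrite -/e => H.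
  by have := lt_le_trans tk H; rewrite ltxx.
have e0 : 0 <= e := le_trans tau0 (ltW eg).
case: (@phase_find _ _ _ _ _ bS hq hr e e0 e1) => p [pM Sp1 Sp2].
have hnS : h \notin ES p.
  apply/negP => hE; move: CSlt.
  by rewrite (@C_in _ _ _ _ _ bS hq hr h p e (ltnW pM) hE Sp1) ltxx.
have sub : EP k \subset ES p.
  apply/subsetP => g gE.
  have gh : g != h by apply: contraTneq gE => ->; exact: hk1lt.
  have Cg : CP g e = q g by apply: (@C_in _ _ _ _ _ bP hq hr g k e) => //; [exact: ltnW | exact: ltW].
  have Cs : CS g e = q g.
    apply/eqP; rewrite eq_le (@C_le _ _ _ _ _ bS hq hr) -Cg; exact: MonE.1.
  exact: (@C_char _ _ _ _ _ bS hq hr g p e pM Sp1 Sp2 Cs).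
have cS : cur (bS B) (ES p) = Some h by rewrite hb //; exact: cur_sub ck sub hnS.
have rB : rhoS p B h = r B by rewrite /rho cS eqxx.
have dO := O_phase pM Sp1 (ltW Sp2) (lexx _).
have rsum : r B <= \sum_(B' | B' != i) rhoS p B' h.
  rewrite (bigD1 B) //= rB lerDl sumr_ge0 // => B' _; exact: (@rho_ge0 _ _ _ _ _ bS hr).
have gain : 0 < (tS p.+1 - e) * r B by rewrite mulr_gt0 // subr_gt0.
have gain2 : (tS p.+1 - e) * r B <= (tS p.+1 - e) * \sum_(B' | B' != i) rhoS p B' h.
  by apply: ler_wpM2l => //; rewrite subr_ge0 ltW.
have O1 : \sum_(B' | B' != i) AS B' h (tS p.+1) <= \sum_(B' | B' != i) AS B' h 1.
  apply: ler_sum => B' _; apply: (@Al_mono _ _ _ _ _ bS hr).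
  exact: (@tm_le1 _ _ _ _ _ bS hq hr).
have OM := MonE.2 CSlt; rewrite /OP /OS in OM.
move: S1 OPE dO gain gain2 O1 OM.
move: (AS i h 1) (\sum_(B | B != i) AS B h 1) (\sum_(B | B != i) AP B h e).
move: (\sum_(B' | B' != i) AS B' h (tS p.+1)) (\sum_(B | B != i) AS B h e).
move: ((tS p.+1 - e) * r B) ((tS p.+1 - e) * \sum_(B' | B' != i) rhoS p B' h).
move=> a b c d f g j; lra.
Qed.

End Main.

End Aux.
Import Aux.

Theorem theorem2 (R : realFieldType) (n m : nat)
    (q : 'I_m -> R) (r : 'I_n -> R) (pi : 'I_n -> {perm 'I_m})
    (hq : forall j, 0 < q j) (hr : forall i, 0 < r i)
    (hsum : \sum_(j < m) q j = \sum_(i < n) r i)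
    (hminmax : forall (i : 'I_n) (j : 'I_m), r i <= q j) :
  forall (i : 'I_n) (sigma_i : {perm 'I_m}),
    ~ lex_pref (pi i)
        (SG_alloc q r (fun k => if k == i then sigma_i else pi k) i)
        (SG_alloc q r pi i).
Proof.
move=> i sg [kw [Heq Hlt]].
set bS := fun k => if k == i then sg else pi k.
have SGE : forall b B j, SG_alloc q r b B j = al q r b (M m) B j by [].
rewrite !SGE in Heq Hlt.
have hb : forall B, B != i -> bS B = pi B by move=> B Bi; rewrite /bS (negbTE Bi).
have hbi : bS i = sg by rewrite /bS eqxx.
pose D k := (m < k)%N || (cur sg (Ex q r pi k) != cur (pi i) (Ex q r pi k)).
have exD : exists k, D k by exists m.+1; rewrite /D ltnSn.
case: (ex_minnP exD) => k0 Dk0 k0min.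
have same : forall k, (k <= k0)%N -> st q r bS k = st q r pi k.
  elim=> [|k IH] kk //.
  have nD : ~~ D k by apply/negP => Dk; have := k0min _ Dk; rewrite leqNgt kk.
  move: nD; rewrite /D negb_or negbK => /andP [_ /eqP Hc].
  have e1 : st q r bS k.+1 = sg_step r bS (st q r bS k) by [].
  have e2 : st q r pi k.+1 = sg_step r pi (st q r pi k) by [].
  rewrite e1 e2 (IH (ltnW kk)).
  apply: step_eq => B; rewrite /bS; case: eqP => [->|_]; last by [].
  exact: Hc.
have eqall : (forall j, al q r bS (M m) i j = al q r pi (M m) i j) -> False.
  move=> H; move: Hlt; rewrite H ltxx //.
case: (leqP k0 m) => k0m; last first.
  apply: eqall => j; rewrite /al same //.
have hst := same k0 (leqnn _).
move: Dk0; rewrite /D ltnNge k0m /= => Dk0.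
have tPle := @tm_le1 _ _ _ _ _ pi hq hr k0.
case: (eqVneq (tm q r pi k0) 1) => [t1|tn1].
  apply: eqall => j.
  have t1S : tm q r bS k0 = 1 by rewrite /tm hst.
  have dM : M m = (k0 + (M m - k0))%N by rewrite subnKC // /M; lia.
  rewrite dM (proj2 (@one_frozen _ _ _ _ _ pi hq hr _ _ t1)).
  rewrite (proj2 (@one_frozen _ _ _ _ _ bS hq hr _ _ t1S)).
  by rewrite /al hst.
have htau : tm q r pi k0 < 1 by rewrite lt_neqAle tn1 tPle.
case Hc : (cur (pi i) (Ex q r pi k0)) => [h|]; last first.
  by move: Dk0; rewrite Hc (cur_None2 _ Hc).
have hcS : cur (bS i) (Ex q r bS k0) != Some h.
  by rewrite hbi /Ex hst -/(Ex q r pi k0) -Hc.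
pose D1 k := (M m <= k)%N || (h \in Ex q r pi k).
have exD1 : exists k, D1 k by exists (M m); rewrite /D1 leqnn.
case: (ex_minnP exD1) => k1 Dk1 k1min.
have hk1M : (k1 <= M m)%N by apply: k1min; rewrite /D1 leqnn.
have hk1lt : forall k, (k < k1)%N -> h \notin Ex q r pi k.
  move=> k kk; apply/negP => hE; have := k1min k; rewrite /D1 hE orbT => /(_ isT).
  by rewrite leqNgt kk.
have hk1in : (k1 < M m)%N -> h \in Ex q r pi k1.
  by move=> lt; move: Dk1; rewrite /D1 leqNgt lt.
have LT := main_lt hq hr hminmax hb k0m hst Hc hcS htau hk1M hk1lt hk1in.
set kh := ((pi i)^-1)%g h.
have pkh : pi i kh = h by rewrite /kh permKV.
have before : forall l : 'I_m, (l < kh)%N -> al q r bS (M m) i (pi i l) = al q r pi (M m) i (pi i l).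
  move=> l lt; have gE := cur_before Hc lt.
  have gES : pi i l \in Ex q r bS k0 by rewrite /Ex hst.
  have kM : (k0 <= M m)%N := leq_trans k0m (leqnSn m).
  rewrite (al_frozen i gES kM) (al_frozen i gE kM).
  by rewrite /al hst.
case: (ltngtP kw kh) => [lt|gt|eq].
- by move: Hlt; rewrite before // ltxx.
- by move: (Heq kh gt); rewrite !SGE pkh => E; move: LT; rewrite E ltxx.
- have E : kw = kh by apply: val_inj.
  by move: Hlt; rewrite E pkh => H; have := lt_trans H LT; rewrite ltxx.
Qed.
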